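(* Let $m,n\ge1$ with $m+n\ge3$ and $s>1$. Let $P\in\mathbb{R}^{2m\times 2n}$ be the block matrix $P=\begin{bmatrix} s\mathbf{1} & \mathbf{1}\\ \mathbf{1} & s\mathbf{1}\end{bmatrix}$ with $m\times n$ blocks, where $\mathbf{1}$ is the all-ones matrix. For non-negative $Q\in\mathbb{R}^{2m\times 2n}$ with no zero row or column, let $J(Q)=\|Q-P\|_F^2 - \lambda(\sigma_1(B(Q))+\sigma_2(B(Q)))$, where $\lambda>0$ and $B(Q)$ is the DTM of the joint pmf $Q/(\mathbf{1}^TQ\mathbf{1})$. Let $Q_1=\begin{bmatrix} s\mathbf{1} & \mathbf{0}\\ \mathbf{0} & s\mathbf{1}\end{bmatrix}$ (with $m\times n$ blocks) and let $Q_2$ be obtained from $P$ by setting to $0$ all entries of the last row and of the last column except the $(2m,2n)$ entry, which equals $s$. Then $J(Q_1)=2mn-2\lambda$ and $J(Q_2)=m+n+s^2(m+n-2)-2\lambda$. Consequently, if $s<\sqrt{(2mn-m-n)/(m+n-2)}$, then $J(Q_2)<J(Q_1)$, so $Q_1$ is not a global minimizer of $J$ over non-negative matrices.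
   Context: For a joint pmf $P_{Y,X}$ (viewed as a matrix) with strictly positive marginals $P_Y$ (row sums) and $P_X$ (column sums), the divergence transition matrix is $B(P_{Y,X})=[P_Y]^{-1/2}P_{Y,X}[P_X]^{-1/2}$, where $[P]$ is the diagonal matrix with $P$ on its diagonal; its singular values are $\sigma_1\ge\sigma_2\ge\cdots$ and $\sigma_1=1$. $\|\cdot\|_F$ is the Frobenius norm. *)

(* Defs.v *)
(* real numbers are modelled by an arbitrary real closed field R. *)
From HB Require Import structures.
From Stdlib Require Import ClassicalEpsilon.
From mathcomp Require Import all_boot all_order all_algebra.
Set Implicit Arguments. Unset Strict Implicit. Unset Printing Implicit Defensive.
Import Order.TTheory GRing.Theory Num.Theory.
Local Open Scope ring_scope.

Section Defs.
Variable R : rcfType.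

Definition frob_norm (p q : nat) (A : 'M[R]_(p, q)) : R :=
  Num.sqrt (\sum_(i < p) \sum_(j < q) A i j ^+ 2).

(* s is the list sigma_1 >= sigma_2 >= ... >= 0 of the min(p,q) singular values of A:
   their squares are the eigenvalues (with multiplicity) of A A^T, padded with zeros. *)
Definition is_singvals (p q : nat) (A : 'M[R]_(p, q)) (s : seq R) : Prop :=
  [/\ size s = minn p q,
      sorted (fun x y => y <= x) s,
      all (fun x => 0 <= x) s &
      char_poly (A *m A^T) = 'X^(p - minn p q) * \prod_(x <- s) ('X - (x ^+ 2)%:P)].

Definition singvals (p q : nat) (A : 'M[R]_(p, q)) : seq R :=
  epsilon (inhabits [::]) (is_singvals A).

(* k-th singular value, 1-indexed: sigma 1 A is the largest *)
Definition sigma (p q : nat) (k : nat) (A : 'M[R]_(p, q)) : R :=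
  nth 0 (singvals A) k.-1.

(* marginals of a joint pmf P_{Y,X} viewed as a matrix *)
Definition rowm (p q : nat) (M : 'M[R]_(p, q)) : 'rV[R]_p := \row_i \sum_(j < q) M i j.
Definition colm (p q : nat) (M : 'M[R]_(p, q)) : 'rV[R]_q := \row_j \sum_(i < p) M i j.

Definition DTM (p q : nat) (M : 'M[R]_(p, q)) : 'M[R]_(p, q) :=
  diag_mx (\row_i (Num.sqrt (rowm M 0 i))^-1) *m M *m
  diag_mx (\row_j (Num.sqrt (colm M 0 j))^-1).

Definition total (p q : nat) (Q : 'M[R]_(p, q)) : R := \sum_(i < p) \sum_(j < q) Q i j.

Definition admissible (p q : nat) (Q : 'M[R]_(p, q)) : Prop :=
  (forall i j, 0 <= Q i j) /\
  (forall i, exists j, Q i j != 0) /\ (forall j, exists i, Q i j != 0).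

Definition Jfun (p q : nat) (lam : R) (P Q : 'M[R]_(p, q)) : R :=
  frob_norm (Q - P) ^+ 2
  - lam * (sigma 1 (DTM ((total Q)^-1 *: Q)) + sigma 2 (DTM ((total Q)^-1 *: Q))).

Definition Pmat (m n : nat) (s : R) : 'M[R]_(m + m, n + n) :=
  block_mx (const_mx s) (const_mx 1) (const_mx 1) (const_mx s).

Definition Q1mat (m n : nat) (s : R) : 'M[R]_(m + m, n + n) :=
  block_mx (const_mx s) 0 0 (const_mx s).

Definition Q2mat (m n : nat) (s : R) : 'M[R]_(m + m, n + n) :=
  \matrix_(i, j)
    if (i == (m + m).-1 :> nat) || (j == (n + n).-1 :> nat) then
      (if (i == (m + m).-1 :> nat) && (j == (n + n).-1 :> nat) then s else 0)
    else Pmat m n s i j.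

End Defs.

(* Main.v *)
Require Import Defs.
From HB Require Import structures.
From Stdlib Require Import ClassicalEpsilon.
From mathcomp Require Import all_boot all_order all_algebra.
From mathcomp Require Import ring lra zify.
Import Order.TTheory GRing.Theory Num.Theory.
Local Open Scope ring_scope.

Lemma sylv (R : comNzRingType) p r (U : 'M[R]_(p,r)) (K : 'M[R]_(r,p)) :
  char_poly (U *m K) * 'X^r = 'X^p * char_poly (K *m U).
Proof.
set Up := map_mx polyC U; set Kp := map_mx polyC K.
have e1 : char_poly_mx (U *m K) = 'X%:M - Up *m Kp by rewrite /char_poly_mx map_mxM.
have e2 : char_poly_mx (K *m U) = 'X%:M - Kp *m Up by rewrite /char_poly_mx map_mxM.
pose N := block_mx ('X%:M : 'M_p) Up Kp (1%:M : 'M_r).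
have h1 : block_mx 1%:M Up 0 1%:M *m block_mx ('X%:M - Up *m Kp) 0 Kp 1%:M = N.
  rewrite mulmx_block ?mul1mx ?mul0mx ?mulmx0 ?mulmx1 ?add0r ?addr0.
  by rewrite subrK.
have h2 : N *m block_mx 1%:M (- Up) 0 ('X%:M) = block_mx ('X%:M) 0 Kp ('X%:M - Kp *m Up).
  rewrite mulmx_block ?mulmx1 ?mulmx0 ?mul1mx ?mul0mx ?addr0 ?add0r.
  rewrite mulmxN mul_scalar_mx mul_mx_scalar addNr.
  by rewrite mulmxN addrC.
have d1 : \det N = char_poly (U *m K).
  by rewrite -h1 det_mulmx det_ublock det_lblock !det1 /char_poly e1 !mul1r mulr1.
have := congr1 determinant h2.
rewrite det_mulmx det_ublock det_lblock d1 det1 mul1r !det_scalar /char_poly e2 => ->.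
by [].
Qed.

Section Typed.
Context {R : rcfType}.

Definition tmat {t p q} (tr : 'I_p -> 'I_t) (tc : 'I_q -> 'I_t) (W : 'M[R]_t) : 'M[R]_(p,q) :=
  \matrix_(i,j) W (tr i) (tc j).
Definition cnt {t p} (tr : 'I_p -> 'I_t) (k : 'I_t) : R := \sum_i (tr i == k)%:R.

Lemma pick_sum {t} (a : 'I_t) (F : 'I_t -> R) : \sum_k (a == k)%:R * F k = F a.
Proof.
rewrite (bigD1 a) //= eqxx mul1r big1 ?addr0 // => k hk.
by rewrite eq_sym (negbTE hk) mul0r.
Qed.

Lemma sum_type {t p} (tr : 'I_p -> 'I_t) (F : 'I_t -> R) :
  \sum_i F (tr i) = \sum_k cnt tr k * F k.
Proof.
transitivity (\sum_i \sum_k (tr i == k)%:R * F k).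
  by apply: eq_bigr => i _; rewrite pick_sum.
rewrite exchange_big; apply: eq_bigr => k _; by rewrite /cnt mulr_suml.
Qed.

Definition rsum {t q} (W : 'M[R]_t) (tc : 'I_q -> 'I_t) k := \sum_l cnt tc l * W k l.
Definition csum {t p} (W : 'M[R]_t) (tr : 'I_p -> 'I_t) l := \sum_k cnt tr k * W k l.

Lemma rowm_tmat t p q tr tc W i : rowm (@tmat t p q tr tc W) 0 i = rsum W tc (tr i).
Proof.
rewrite mxE; under eq_bigr do rewrite mxE.
by rewrite (sum_type tc (fun l => W (tr i) l)).
Qed.

Lemma colm_tmat t p q tr tc W j : colm (@tmat t p q tr tc W) 0 j = csum W tr (tc j).
Proof.
rewrite mxE; under eq_bigr do rewrite mxE.
by rewrite (sum_type tr (fun k => W k (tc j))).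
Qed.

Lemma DTM_E p q (M : 'M[R]_(p,q)) i j :
  DTM M i j = (Num.sqrt (rowm M 0 i))^-1 * M i j * (Num.sqrt (colm M 0 j))^-1.
Proof. by rewrite /DTM mul_mx_diag mul_diag_mx !mxE. Qed.

Lemma DTM_scale p q (M : 'M[R]_(p,q)) c : 0 < c -> DTM (c *: M) = DTM M.
Proof.
move=> hc; apply/matrixP => i j; rewrite !DTM_E.
have -> : rowm (c *: M) 0 i = c * rowm M 0 i.
  by rewrite !mxE mulr_sumr; apply: eq_bigr => k _; rewrite mxE.
have -> : colm (c *: M) 0 j = c * colm M 0 j.
  by rewrite !mxE mulr_sumr; apply: eq_bigr => k _; rewrite mxE.
rewrite !sqrtrM ?(ltW hc) // !invfM [(c *: M) i j]mxE.
have hc2 : c = Num.sqrt c * Num.sqrt c by rewrite -expr2 sqr_sqrtr // ltW.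
have hn : Num.sqrt c != 0 by rewrite sqrtr_eq0 -ltNge.
move: (Num.sqrt (rowm M 0 i))^-1 (Num.sqrt (colm M 0 j))^-1 => x y.
rewrite [in c * M i j]hc2.
by field.
Qed.

Section Gen.
Variables (t p q : nat) (tr : 'I_p -> 'I_t) (tc : 'I_q -> 'I_t) (W : 'M[R]_t).
Hypothesis hr : forall k, 0 < rsum W tc k.
Hypothesis hc : forall l, 0 < csum W tr l.

Definition Umat : 'M[R]_(p,t) := \matrix_(i,k) ((tr i == k)%:R * (Num.sqrt (rsum W tc k))^-1).
Definition Gmat : 'M[R]_t := \matrix_(k,k') \sum_l cnt tc l * (W k l * W k' l / csum W tr l).

Lemma AAt : DTM (tmat tr tc W) *m (DTM (tmat tr tc W))^T = Umat *m (Gmat *m Umat^T).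
Proof.
apply/matrixP => i i'; rewrite [LHS]mxE [RHS]mxE.
pose x k := (Num.sqrt (rsum W tc k))^-1.
pose y l := (Num.sqrt (csum W tr l))^-1.
pose F l := x (tr i) * W (tr i) l * y l * (x (tr i') * W (tr i') l * y l).
transitivity (\sum_j F (tc j)).
  by apply: eq_bigr => j _; rewrite /F [_^T _ _]mxE !DTM_E !rowm_tmat !colm_tmat !mxE.
rewrite (sum_type tc F).
transitivity (\sum_k (tr i == k)%:R * (x k * \sum_k' (tr i' == k')%:R * (Gmat k k' * x k'))).
  rewrite pick_sum pick_sum mxE mulr_suml mulr_sumr; apply: eq_bigr => l _; rewrite /F.
  have hy : (csum W tr l)^-1 = y l * y l.
    by rewrite -invfM -expr2 sqr_sqrtr // ltW.
  rewrite hy; ring.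
apply: eq_bigr => k _; rewrite !mxE mulrA; congr (_ * _).
by apply: eq_bigr => k' _; rewrite [Umat^T _ _]mxE [Umat _ _]mxE mulrCA.
Qed.

Lemma UtU : Umat^T *m Umat = diag_mx (\row_k (cnt tr k / rsum W tc k)).
Proof.
apply/matrixP => k k'; rewrite [LHS]mxE [RHS]mxE.
pose x k := (Num.sqrt (rsum W tc k))^-1.
pose F a := (a == k)%:R * x k * ((a == k')%:R * x k').
transitivity (\sum_i F (tr i)).
  by apply: eq_bigr => i _; rewrite /F !mxE.
rewrite (sum_type tr F).
transitivity (\sum_a (k == a)%:R * (cnt tr a * (x k * ((a == k')%:R * x k')))).
  by apply: eq_bigr => a _; rewrite /F eq_sym; ring.
rewrite pick_sum !mxE.
case: (eqVneq k k') => [<-|hkk]; last by rewrite mul0r !mulr0 mulr0n.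
rewrite mul1r mulr1n /x -invfM -expr2 sqr_sqrtr ?ltW //.
Qed.

Lemma char_tmat : char_poly (DTM (tmat tr tc W) *m (DTM (tmat tr tc W))^T) * 'X^t
  = 'X^p * char_poly (\matrix_(k,k') (Gmat k k' * (cnt tr k' / rsum W tc k'))).
Proof.
rewrite AAt sylv -mulmxA UtU mul_mx_diag; congr (_ * char_poly _).
by apply/matrixP => k k'; rewrite !mxE.
Qed.
End Gen.
End Typed.
Lemma sv_uniq (R : rcfType) p q (A : 'M[R]_(p,q)) s1 s2 :
  is_singvals A s1 -> is_singvals A s2 -> s1 = s2.
Proof.
case=> sz1 so1 nn1 c1 [sz2 so2 nn2 c2].
have eprod : \prod_(x <- s1) ('X - (x^+2)%:P) = \prod_(x <- s2) ('X - (x^+2)%:P).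
  apply: (mulfI (x := 'X^(p - minn p q))); first by rewrite expf_neq0 // polyX_eq0.
  by rewrite -c1 -c2.
have pe : perm_eq (map (fun x => x ^+ 2) s1) (map (fun x => x ^+ 2) s2).
  by apply: prod_XsubC_eq; rewrite !big_map.
have sm : forall s : seq R, sorted (fun x y => y <= x) s -> all (fun x => 0 <= x) s ->
    sorted (fun x y => y <= x) (map (fun x => x ^+ 2) s).
  move=> s so nn; apply: (homo_sorted_in (P := fun x : R => 0 <= x) (e := fun x y : R => y <= x)) => //.
  move=> x y hx hy /= hxy; rewrite ler_sqr ?nnegrE //.
have := sorted_eq _ _ (sm _ so1 nn1) (sm _ so2 nn2) pe.
move=> /(_ _) /(_ _) h.
have e : map (fun x => x ^+ 2) s1 = map (fun x => x ^+ 2) s2.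
  apply: h; first by move=> x y z /= h1 h2; apply: le_trans h2 h1.
  by move=> x y /andP [h1 h2]; apply/eqP; rewrite eq_le h1 h2.
have inv : forall s : seq R, all (fun x => 0 <= x) s -> map Num.sqrt (map (fun x => x ^+ 2) s) = s.
  move=> s nn; rewrite -map_comp -[RHS]map_id; apply/eq_in_map => x /(allP nn) hx /=.
  by rewrite sqrtr_sqr ger0_norm.
by rewrite -(inv _ nn1) -(inv _ nn2) e.
Qed.

Lemma sigma_of (R : rcfType) p q (A : 'M[R]_(p,q)) s0 k :
  is_singvals A s0 -> sigma k A = nth 0 s0 k.-1.
Proof.
move=> h; rewrite /sigma /singvals.
have hs := epsilon_spec (inhabits [::]) (is_singvals A) (ex_intro _ s0 h).
by rewrite (@sv_uniq _ _ _ _ _ _ hs h).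
Qed.

Lemma Pmat_E (R : rcfType) m n (s : R) i j :
  Pmat m n s i j = if (i < m)%N == (j < n)%N then s else 1.
Proof.
rewrite /Pmat !mxE; case: splitP => i' hi; rewrite !mxE; case: splitP => j' hj; rewrite !mxE;
  by [].
Qed.

Section Typed2.
Context {R : rcfType}.

Lemma cnt_nat {t p} (f : nat -> nat) (hf : forall i, (f i < t.+1)%N) (k : 'I_t.+1) :
  cnt (fun i : 'I_p => inord (f i)) k = \sum_(0 <= i < p) ((f i == k)%:R : R).
Proof.
rewrite /cnt big_mkord; apply: eq_bigr => i _; congr (_ %:R).
by rewrite -(inj_eq val_inj) /= inordK.
Qed.

Lemma sum_const_range a b (c : R) (F : nat -> R) :
  (forall i, (a <= i < b)%N -> F i = c) -> \sum_(a <= i < b) F i = c *+ (b - a).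
Proof. by move=> h; rewrite (eq_big_nat _ _ h) sumr_const_nat. Qed.

Lemma total_tmat {t p q} (tr : 'I_p -> 'I_t) (tc : 'I_q -> 'I_t) (W : 'M[R]_t) :
  Defs.total (tmat tr tc W) = \sum_k \sum_l cnt tr k * cnt tc l * W k l.
Proof.
rewrite /Defs.total.
transitivity (\sum_i (fun k => \sum_l cnt tc l * W k l) (tr i)).
  apply: eq_bigr => i _.
  transitivity (\sum_j (fun l => W (tr i) l) (tc j)); first by apply: eq_bigr => j _; rewrite mxE.
  by rewrite (sum_type tc (fun l => W (tr i) l)).
rewrite (sum_type tr (fun k => \sum_l cnt tc l * W k l)).
apply: eq_bigr => k _; rewrite mulr_sumr; apply: eq_bigr => l _; ring.
Qed.

Lemma sumsq_tmat {t p q} (tr : 'I_p -> 'I_t) (tc : 'I_q -> 'I_t) (W : 'M[R]_t) :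
  \sum_i \sum_j (tmat tr tc W i j) ^+ 2 = \sum_k \sum_l cnt tr k * cnt tc l * W k l ^+ 2.
Proof.
transitivity (\sum_i (fun k => \sum_l cnt tc l * W k l ^+ 2) (tr i)).
  apply: eq_bigr => i _.
  transitivity (\sum_j (fun l => W (tr i) l ^+ 2) (tc j)); first by apply: eq_bigr => j _; rewrite mxE.
  by rewrite (sum_type tc (fun l => W (tr i) l ^+ 2)).
rewrite (sum_type tr (fun k => \sum_l cnt tc l * W k l ^+ 2)).
apply: eq_bigr => k _; rewrite mulr_sumr; apply: eq_bigr => l _; ring.
Qed.

Lemma tmatB {t p q} (tr : 'I_p -> 'I_t) (tc : 'I_q -> 'I_t) (W V : 'M[R]_t) :
  tmat tr tc W - tmat tr tc V = tmat tr tc (W - V).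
Proof. by apply/matrixP => i j; rewrite !mxE. Qed.

Lemma frob_sq p q (A : 'M[R]_(p,q)) : frob_norm A ^+ 2 = \sum_i \sum_j A i j ^+ 2.
Proof.
rewrite /frob_norm sqr_sqrtr //; apply: sumr_ge0 => i _; apply: sumr_ge0 => j _.
exact: sqr_ge0.
Qed.

End Typed2.
Lemma det2 (R : comNzRingType) (B : 'M[R]_2) : \det B = B 0 0 * B 1 1 - B 0 1 * B 1 0.
Proof.
rewrite (expand_det_row _ 0) !big_ord_recl big_ord0 addr0 /cofactor !det_mx11 !mxE /=.
rewrite !expr0 !expr1 !mul1r mulN1r mulrN.
by congr (B _ _ * B _ _ - B _ _ * B _ _); apply/val_inj.
Qed.

Lemma det3 (R : comNzRingType) (B : 'M[R]_3) : \det B =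
  B 0 0 * (B 1 1 * B 2 2 - B 1 2 * B 2 1)
  - B 0 1 * (B 1 0 * B 2 2 - B 1 2 * B 2 0)
  + B 0 2 * (B 1 0 * B 2 1 - B 1 1 * B 2 0).
Proof.
rewrite (expand_det_row _ 0) !big_ord_recl big_ord0 addr0 /cofactor !det2 !mxE /=.
rewrite !expr0 !expr1 /= !mul1r mulN1r /bump /= expr2 mulrNN !mul1r mulrN addrA.
congr (B _ _ * (B _ _ * B _ _ - B _ _ * B _ _) - B _ _ * (B _ _ * B _ _ - B _ _ * B _ _) + B _ _ * (B _ _ * B _ _ - B _ _ * B _ _)); apply/val_inj => //.
Qed.

Lemma char3 (R : rcfType) (H : 'M[R]_3) : H 0 2 = 0 -> H 1 2 = 0 -> H 2 0 = 0 -> H 2 1 = 0 -> H 2 2 = 1 ->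
  (1 - H 0 0) * (1 - H 1 1) = H 0 1 * H 1 0 ->
  char_poly H = ('X - 1) ^+ 2 * ('X - (H 0 0 + H 1 1 - 1)%:P).
Proof.
move=> h02 h12 h20 h21 h22 hid.
rewrite /char_poly det3 !mxE /= h02 h12 h20 h21 h22 !polyC0 polyC1 !subr0 !mulr1n !mulr0n.
have hp : (1 - (H 0 0)%:P) * (1 - (H 1 1)%:P) = (H 0 1)%:P * (H 1 0)%:P.
  by rewrite -polyC1 -!polyCB -!polyCM hid.
rewrite polyCB polyCD polyC1.
transitivity (('X - 1) * (('X - (H 0 0)%:P) * ('X - (H 1 1)%:P) - (H 0 1)%:P * (H 1 0)%:P)); first by ring.
by rewrite -hp; ring.
Qed.


Section Q1.
Context {R : rcfType}.

Definition tr1 m : 'I_(m+m) -> 'I_2 := fun i => inord (m <= i)%N.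
Definition W1 (s : R) : 'M[R]_2 := \matrix_(k,l) ((k == l)%:R * s).
Definition WP1 (s : R) : 'M[R]_2 := \matrix_(k,l) (if k == l then s else 1).

Lemma Q1mat_E m n (s : R) i j :
  Q1mat m n s i j = if (i < m)%N == (j < n)%N then s else 0.
Proof.
rewrite /Q1mat [block_mx _ _ _ _ _ _]mxE; case: splitP => i' hi; rewrite [row_mx _ _ _ _]mxE;
  case: splitP => j' hj; rewrite ?[const_mx _ _ _]mxE ?[(0 : 'M_(_,_)) _ _]mxE //.
Qed.

Lemma tr1_eq m n (i : 'I_(m+m)) (j : 'I_(n+n)) :
  (tr1 m i == tr1 n j) = ((i < m)%N == (j < n)%N).
Proof.
have b2 : forall b : bool, (b < 2)%N by case.
rewrite /tr1 -(inj_eq (@ord_inj 2)) (inordK (b2 _)) (inordK (b2 _)) [(m <= i)%N]leqNgt [(n <= j)%N]leqNgt.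
by case: (i < m)%N; case: (j < n)%N.
Qed.

Lemma Q1_tmat m n (s : R) : Q1mat m n s = tmat (tr1 m) (tr1 n) (W1 s).
Proof. by apply/matrixP => i j; rewrite Q1mat_E !mxE tr1_eq; case: ifP; rewrite ?mul1r ?mul0r. Qed.

Lemma P1_tmat m n (s : R) : Pmat m n s = tmat (tr1 m) (tr1 n) (WP1 s).
Proof. by apply/matrixP => i j; rewrite Pmat_E !mxE tr1_eq. Qed.

Lemma cnt1 m (k : 'I_2) : cnt (tr1 m) k = (m%:R : R).
Proof.
rewrite /tr1 (cnt_nat (fun i => nat_of_bool (m <= i)%N)); last by move=> i; case: (m <= i)%N.
rewrite (big_cat_nat (n := m)) //=; last by lia.
rewrite (sum_const_range _ _ ((0%N == k)%:R)); last first.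
  by move=> i /andP [_ hi]; rewrite leqNgt hi.
rewrite (sum_const_range _ _ ((1%N == k)%:R)); last first.
  by move=> i /andP [hi _]; rewrite hi.
rewrite subn0 addnK.
case: k => [[|[|kk]] hk] /=; rewrite ?mul0rn ?add0r ?addr0 //.
Qed.

Lemma rsum1 n (s : R) k : rsum (W1 s) (tr1 n) k = n%:R * s.
Proof.
rewrite /rsum (eq_bigr (fun l => (k == l)%:R * (n%:R * s))); first by rewrite pick_sum.
by move=> l _; rewrite cnt1 mxE; ring.
Qed.

Lemma csum1 m (s : R) l : csum (W1 s) (tr1 m) l = m%:R * s.
Proof.
rewrite /csum (eq_bigr (fun k => (l == k)%:R * (m%:R * s))); first by rewrite pick_sum.
by move=> k _; rewrite cnt1 mxE eq_sym; ring.
Qed.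

Lemma Hm1 m n (s : R) : (0 < m)%N -> (0 < n)%N -> 0 < s ->
  \matrix_(k,k') (Gmat _ _ _ (tr1 m) (tr1 n) (W1 s) k k' * (cnt (tr1 m) k' / rsum (W1 s) (tr1 n) k'))
  = 1%:M.
Proof.
move=> hm hn hs; apply/matrixP => k k'; rewrite !mxE.
rewrite (eq_bigr (fun l => (k == l)%:R * ((k' == l)%:R * (n%:R * s * s / (m%:R * s)))));
  last by move=> l _; rewrite cnt1 !mxE csum1; ring.
rewrite pick_sum cnt1 rsum1 eq_sym.
have hm' : (m%:R : R) != 0 by rewrite pnatr_eq0 -lt0n.
have hn' : (n%:R : R) != 0 by rewrite pnatr_eq0 -lt0n.
have hs' : s != 0 by rewrite gt_eqF.
case: (k == k'); rewrite /= ?mul0r //.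
by field; rewrite hm' hn' hs'.
Qed.


Lemma charQ1 m n (s : R) : (0 < m)%N -> (0 < n)%N -> 0 < s ->
  char_poly (DTM (tmat (tr1 m) (tr1 n) (W1 s)) *m (DTM (tmat (tr1 m) (tr1 n) (W1 s)))^T) * 'X^2
  = 'X^(m+m) * ('X - 1) ^+ 2.
Proof.
move=> hm hn hs.
have hmR : (0 : R) < m%:R by rewrite ltr0n.
have hnR : (0 : R) < n%:R by rewrite ltr0n.
rewrite char_tmat; last 2 first.
- by move=> k; rewrite rsum1 mulr_gt0.
- by move=> k; rewrite csum1 mulr_gt0.
rewrite Hm1 // char_poly_trig ?scalar_mx_is_trig //.
rewrite !big_ord_recl big_ord0 !mxE /= mulr1 expr2; congr (_ * (('X - _) * ('X - _))).
Qed.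


Lemma prod_nseq0 r : \prod_(x <- nseq r (0:R)) ('X - (x^+2)%:P) = 'X^r.
Proof.
elim: r => [|r IH]; first by rewrite big_nil expr0.
by rewrite /= big_cons IH expr0n /= subr0 exprS.
Qed.

Lemma path_nseq0 (x : R) r : 0 <= x -> path (fun a b => b <= a) x (nseq r 0).
Proof. by elim: r x => //= r IH x hx; rewrite hx IH. Qed.

Lemma all_nseq0 r : all (fun x : R => 0 <= x) (nseq r 0).
Proof. by elim: r => //= r ->; rewrite lexx. Qed.

Lemma sv_Q1 m n (s : R) : (0 < m)%N -> (0 < n)%N -> 0 < s ->
  sigma 1 (DTM (tmat (tr1 m) (tr1 n) (W1 s))) = 1 /\ sigma 2 (DTM (tmat (tr1 m) (tr1 n) (W1 s))) = 1.
Proof.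
move=> hm hn hs.
set k' := minn (m+m) (n+n).
have hk : (2 <= k' <= m + m)%N by rewrite /k'; lia.
have hsv : is_singvals (DTM (tmat (tr1 m) (tr1 n) (W1 s))) [:: 1, 1 & nseq (k' - 2) 0].
  split.
  - by rewrite /= size_nseq; rewrite /k'; lia.
  - by rewrite /= lexx /= path_nseq0 ?ler01.
  - by rewrite /= ler01 all_nseq0.
  - apply: (mulIf (x := 'X^2)); first by rewrite expf_neq0 // polyX_eq0.
    rewrite charQ1 // !big_cons prod_nseq0 expr1n.
    have ex : 'X^(m+m) = 'X^(m + m - k') * 'X^(k' - 2) * ('X^2 : {poly R}).
      by rewrite -!exprD; congr (_ ^+ _); lia.
    rewrite ex polyC1; ring.
by rewrite (@sigma_of _ _ _ _ _ 1 hsv) (@sigma_of _ _ _ _ _ 2 hsv).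
Qed.


Lemma total_Q1 m n (s : R) : Defs.total (tmat (tr1 m) (tr1 n) (W1 s)) = 2 * m%:R * n%:R * s.
Proof.
rewrite total_tmat !big_ord_recl !big_ord0 !cnt1 !mxE /=; ring.
Qed.


Lemma J_Q1 m n (s lam : R) : (0 < m)%N -> (0 < n)%N -> 0 < s ->
  Jfun lam (Pmat m n s) (Q1mat m n s) = 2 * m%:R * n%:R - 2 * lam.
Proof.
move=> hm hn hs.
have hmR : (0 : R) < m%:R by rewrite ltr0n.
have hnR : (0 : R) < n%:R by rewrite ltr0n.
rewrite /Jfun Q1_tmat P1_tmat tmatB frob_sq sumsq_tmat DTM_scale; last first.
  by rewrite total_Q1 invr_gt0 !mulr_gt0.
have [-> ->] := sv_Q1 _ _ _ hm hn hs.
rewrite !big_ord_recl !big_ord0 !cnt1 !mxE /=; ring.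
Qed.

End Q1.


Section Q2.
Context {R : rcfType}.

Definition trn2 m (i : nat) : nat := if i == (m+m).-1 then 2%N else if (i < m)%N then 0%N else 1%N.
Definition tr2 m : 'I_(m+m) -> 'I_3 := fun i => inord (trn2 m i).
Definition wQ (s : R) (a b : nat) : R :=
  if (a == 2%N) || (b == 2%N) then (if (a == 2%N) && (b == 2%N) then s else 0)
  else (if (a == 0%N) == (b == 0%N) then s else 1).
Definition W2 (s : R) : 'M[R]_3 := \matrix_(k,l) wQ s k l.
Definition WP2 (s : R) : 'M[R]_3 := \matrix_(k,l) (if (k == 0%N :> nat) == (l == 0%N :> nat) then s else 1).

Lemma trn2_lt m i : (trn2 m i < 3)%N.
Proof. by rewrite /trn2; case: ifP => //; case: ifP. Qed.

Lemma tr2_val m (i : 'I_(m+m)) : nat_of_ord (tr2 m i) = trn2 m i.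
Proof. by rewrite /tr2 inordK // trn2_lt. Qed.

Lemma Q2_tmat m n (s : R) : (0 < m)%N -> (0 < n)%N ->
  Q2mat m n s = tmat (tr2 m) (tr2 n) (W2 s).
Proof.
move=> hm hn; apply/matrixP => i j; rewrite [Q2mat _ _ _ _ _]mxE Pmat_E [tmat _ _ _ _ _]mxE [W2 _ _ _]mxE !tr2_val /wQ /trn2.
have hi := ltn_ord i; have hj := ltn_ord j.
case E1: (nat_of_ord i == (m+m).-1); case E2: (nat_of_ord j == (n+n).-1) => //=;
  case E3: (i < m)%N; case E4: (j < n)%N => //=; lia.
Qed.

Lemma P2_tmat m n (s : R) : (0 < m)%N -> (0 < n)%N ->
  Pmat m n s = tmat (tr2 m) (tr2 n) (WP2 s).
Proof.
move=> hm hn; apply/matrixP => i j; rewrite Pmat_E [tmat _ _ _ _ _]mxE [WP2 _ _ _]mxE !tr2_val /trn2.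
have hi := ltn_ord i; have hj := ltn_ord j.
case E1: (nat_of_ord i == (m+m).-1); case E2: (nat_of_ord j == (n+n).-1) => //=;
  case E3: (i < m)%N; case E4: (j < n)%N => //=; lia.
Qed.


Lemma cnt2 m (k : 'I_3) : (0 < m)%N -> cnt (tr2 m) k =
  (if k == 0%N :> nat then m%:R else if k == 1%N :> nat then m%:R - 1 else 1 : R).
Proof.
move=> hm.
rewrite /tr2 (cnt_nat (trn2 m)); last by move=> i; exact: trn2_lt.
rewrite (big_cat_nat (n := m)) //=; last by lia.
rewrite (big_cat_nat (n := (m+m).-1) (m := m) (p := m + m)) //=; try lia.
rewrite (sum_const_range _ _ ((0%N == k)%:R)); last first.
  move=> i /andP [_ hi]; rewrite /trn2.
  have -> : (i == (m+m).-1) = false by apply/eqP; lia.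
  by rewrite hi.
rewrite (sum_const_range _ _ ((1%N == k)%:R)); last first.
  move=> i /andP [hi1 hi]; rewrite /trn2.
  have -> : (i == (m+m).-1) = false by apply/eqP; lia.
  by have -> : (i < m)%N = false by lia.
rewrite (sum_const_range _ _ ((2%N == k)%:R)); last first.
  move=> i /andP [hi1 hi]; rewrite /trn2.
  by have -> : (i == (m+m).-1) = true by apply/eqP; lia.
have -> : ((m + m).-1 - m = m - 1)%N by lia.
have -> : (m + m - (m + m).-1 = 1)%N by lia.
rewrite subn0.
by case: k => [[|[|[|kk]]] hk] /=; rewrite ?mul0rn ?add0r ?addr0 ?natrB.
Qed.


Lemma rsum2 n (s : R) (k : 'I_3) : (0 < n)%N -> rsum (W2 s) (tr2 n) k =
  (if k == 0%N :> nat then n%:R * s + (n%:R - 1) else if k == 1%N :> nat then n%:R + (n%:R - 1) * s else s : R).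
Proof.
move=> hn; rewrite /rsum !big_ord_recl big_ord0 !cnt2 // !mxE /wQ.
by case: k => [[|[|[|kk]]] hk] //=; ring.
Qed.

Lemma csum2 m (s : R) (l : 'I_3) : (0 < m)%N -> csum (W2 s) (tr2 m) l =
  (if l == 0%N :> nat then m%:R * s + (m%:R - 1) else if l == 1%N :> nat then m%:R + (m%:R - 1) * s else s : R).
Proof.
move=> hm; rewrite /csum !big_ord_recl big_ord0 !cnt2 // !mxE /wQ.
by case: l => [[|[|[|kk]]] hk] //=; ring.
Qed.

Definition Hm2 m n (s : R) : 'M[R]_3 := \matrix_(k,k')
  (Gmat _ _ _ (tr2 m) (tr2 n) (W2 s) k k' * (cnt (tr2 m) k' / rsum (W2 s) (tr2 n) k')).

Ltac unfH := rewrite /Hm2 !mxE !big_ord_recl !big_ord0 !cnt2 // !csum2 // !rsum2 // !mxE /wQ /=.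

Lemma posA (x s : R) : 1 < s -> 1 <= x -> 0 < x * s + (x - 1) /\ 0 < x + (x - 1) * s.
Proof. move=> hs hx. have h2 : 0 <= (x - 1) * (s - 1) by apply: mulr_ge0; rewrite subr_ge0 // ltW. split; nra. Qed.

Section Facts.
Variables (m n : nat) (s : R).
Hypotheses (hm : (0 < m)%N) (hn : (0 < n)%N) (hs : 1 < s).
Lemma hM : 1 <= m%:R :> R. Proof. by rewrite ler1n. Qed.
Lemma hN : 1 <= n%:R :> R. Proof. by rewrite ler1n. Qed.
Lemma pos_cs0 : 0 < m%:R * s + (m%:R - 1) :> R. Proof. exact: (posA _ _ hs hM).1. Qed.
Lemma pos_cs1 : 0 < m%:R + (m%:R - 1) * s :> R. Proof. exact: (posA _ _ hs hM).2. Qed.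
Lemma pos_rs0 : 0 < n%:R * s + (n%:R - 1) :> R. Proof. exact: (posA _ _ hs hN).1. Qed.
Lemma pos_rs1 : 0 < n%:R + (n%:R - 1) * s :> R. Proof. exact: (posA _ _ hs hN).2. Qed.
Lemma nz_cs0 : m%:R * s + (m%:R - 1) != 0 :> R. Proof. by rewrite gt_eqF // pos_cs0. Qed.
Lemma nz_cs1 : m%:R + (m%:R - 1) * s != 0 :> R. Proof. by rewrite gt_eqF // pos_cs1. Qed.
Lemma nz_rs0 : n%:R * s + (n%:R - 1) != 0 :> R. Proof. by rewrite gt_eqF // pos_rs0. Qed.
Lemma nz_rs1 : n%:R + (n%:R - 1) * s != 0 :> R. Proof. by rewrite gt_eqF // pos_rs1. Qed.
Lemma nz_s : s != 0. Proof. move: hs => h; by rewrite gt_eqF //; lra. Qed.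

Lemma H02 : Hm2 m n s 0 2 = 0. Proof. unfH; ring. Qed.
Lemma H12 : Hm2 m n s 1 2 = 0. Proof. unfH; ring. Qed.
Lemma H20 : Hm2 m n s 2 0 = 0. Proof. unfH; ring. Qed.
Lemma H21 : Hm2 m n s 2 1 = 0. Proof. unfH; ring. Qed.
Lemma H22 : Hm2 m n s 2 2 = 1. Proof. by unfH; field; rewrite ?nz_s ?nz_cs0 ?nz_cs1 ?nz_rs0 ?nz_rs1. Qed.
Lemma Hid : (1 - Hm2 m n s 0 0) * (1 - Hm2 m n s 1 1) = Hm2 m n s 0 1 * Hm2 m n s 1 0.
Proof.
unfH; field; by rewrite ?nz_s ?nz_cs0 ?nz_cs1 ?nz_rs0 ?nz_rs1.
Qed.

Definition mu := Hm2 m n s 0 0 + Hm2 m n s 1 1 - 1.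

Lemma mu_closed : mu = m%:R * (m%:R - 1) * n%:R * (n%:R - 1) * (s ^+ 2 - 1) ^+ 2 /
  ((n%:R * s + (n%:R - 1)) * (n%:R + (n%:R - 1) * s) * (m%:R * s + (m%:R - 1)) * (m%:R + (m%:R - 1) * s)).
Proof.
have hid := Hid.
rewrite /mu.
have e : Hm2 m n s 0 0 + Hm2 m n s 1 1 - 1 = Hm2 m n s 0 0 * Hm2 m n s 1 1 - Hm2 m n s 0 1 * Hm2 m n s 1 0.
  by rewrite -hid; ring.
rewrite e; unfH; field; by rewrite ?nz_s ?nz_cs0 ?nz_cs1 ?nz_rs0 ?nz_rs1.
Qed.

Lemma omh00 : 1 - Hm2 m n s 0 0 = (m%:R - 1) * s * (n%:R * (m%:R + (m%:R - 1) * s) + (n%:R - 1) * (m%:R * s + (m%:R - 1)))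
  / ((n%:R * s + (n%:R - 1)) * (m%:R * s + (m%:R - 1)) * (m%:R + (m%:R - 1) * s)).
Proof. unfH; field; by rewrite ?nz_s ?nz_cs0 ?nz_cs1 ?nz_rs0 ?nz_rs1. Qed.

Lemma omh11 : 1 - Hm2 m n s 1 1 = (n%:R * (m%:R + (m%:R - 1) * s) * m%:R * s + (n%:R - 1) * s * (m%:R * s + (m%:R - 1)) * m%:R)
  / ((n%:R + (n%:R - 1) * s) * (m%:R * s + (m%:R - 1)) * (m%:R + (m%:R - 1) * s)).
Proof. unfH; field; by rewrite ?nz_s ?nz_cs0 ?nz_cs1 ?nz_rs0 ?nz_rs1. Qed.


Ltac pos := repeat (assumption || apply: sqr_ge0 || apply: divr_ge0 || apply: mulr_ge0 || apply: addr_ge0 || rewrite invr_ge0).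

Lemma atoms : [/\ 0 <= m%:R :> R, 0 <= m%:R - 1 :> R, 0 <= n%:R :> R, 0 <= n%:R - 1 :> R & 0 <= s].
Proof.
have h1 := hM; have h2 := hN; move: hs => h3.
split; [exact: ler0n | by rewrite subr_ge0 | exact: ler0n | by rewrite subr_ge0 | lra].
Qed.

Lemma mu_ge0 : 0 <= mu.
Proof.
rewrite mu_closed; have [a1 a2 a3 a4 a5] := atoms.
have := ltW pos_cs0; have := ltW pos_cs1; have := ltW pos_rs0; have := ltW pos_rs1 => b1 b2 b3 b4.
pos.
Qed.

Lemma mu_le1 : mu <= 1.
Proof.
have [a1 a2 a3 a4 a5] := atoms.
have := ltW pos_cs0; have := ltW pos_cs1; have := ltW pos_rs0; have := ltW pos_rs1 => b1 b2 b3 b4.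
have h0 : 0 <= 1 - Hm2 m n s 0 0 by rewrite omh00; pos.
have h1 : 0 <= 1 - Hm2 m n s 1 1 by rewrite omh11; pos.
rewrite /mu; lra.
Qed.

Lemma mu0 : (m = 1 \/ n = 1)%N -> mu = 0.
Proof. by rewrite mu_closed => -[->|->]; rewrite subrr ?mulr0 ?mul0r. Qed.

End Facts.

Lemma charQ2 m n (s : R) (hm : (0 < m)%N) (hn : (0 < n)%N) (hs : 1 < s) :
  char_poly (DTM (tmat (tr2 m) (tr2 n) (W2 s)) *m (DTM (tmat (tr2 m) (tr2 n) (W2 s)))^T) * 'X^3
  = 'X^(m+m) * (('X - 1) ^+ 2 * ('X - (mu m n s)%:P)).
Proof.
rewrite char_tmat; last 2 first.
- move=> k; rewrite rsum2 //; case: ifP => _; first exact: pos_rs0.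
  case: ifP => _; first exact: pos_rs1. move: hs => h; lra.
- move=> k; rewrite csum2 //; case: ifP => _; first exact: pos_cs0.
  case: ifP => _; first exact: pos_cs1. move: hs => h; lra.
congr (_ * _).
have h02 : Hm2 m n s 0 2 = 0 by apply: H02.
have h12 : Hm2 m n s 1 2 = 0 by apply: H12.
have h20 : Hm2 m n s 2 0 = 0 by apply: H20.
have h21 : Hm2 m n s 2 1 = 0 by apply: H21.
have h22 : Hm2 m n s 2 2 = 1 by apply: H22.
have hid : (1 - Hm2 m n s 0 0) * (1 - Hm2 m n s 1 1) = Hm2 m n s 0 1 * Hm2 m n s 1 0 by apply: Hid.
exact: (@char3 _ _ h02 h12 h20 h21 h22 hid).
Qed.

Lemma sv_Q2 m n (s : R) (hm : (0 < m)%N) (hn : (0 < n)%N) (hs : 1 < s) :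
  sigma 1 (DTM (tmat (tr2 m) (tr2 n) (W2 s))) = 1 /\
  sigma 2 (DTM (tmat (tr2 m) (tr2 n) (W2 s))) = 1.
Proof.
set k' := minn (m+m) (n+n).
have hk : (2 <= k' <= m + m)%N by rewrite /k'; lia.
have mg0 : 0 <= mu m n s by apply: mu_ge0.
have ml1 : mu m n s <= 1 by apply: mu_le1.
have hX3 : 'X^3 != 0 :> {poly R} by rewrite expf_neq0 // polyX_eq0.
case: (boolP ((1 < m) && (1 < n))%N) => hmn.
- have hk3 : (4 <= k')%N by rewrite /k'; move: hmn => /andP [h1 h2]; lia.
  have hsv : is_singvals (DTM (tmat (tr2 m) (tr2 n) (W2 s))) [:: 1, 1, Num.sqrt (mu m n s) & nseq (k' - 3) 0].
    split.
    - by rewrite /= size_nseq; rewrite /k'; lia.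
    - rewrite /= lexx /= path_nseq0 ?sqrtr_ge0 // andbT.
      by rewrite -sqrtr1 ler_sqrt // ltr01.
    - by rewrite /= ler01 sqrtr_ge0 all_nseq0.
    - apply: (mulIf hX3).
      rewrite charQ2 // !big_cons prod_nseq0 expr1n sqr_sqrtr //.
      have ex : 'X^(m+m) = 'X^(m + m - k') * 'X^(k' - 3) * ('X^3 : {poly R}).
        by rewrite -!exprD; congr (_ ^+ _); lia.
      rewrite ex polyC1; ring.
  by rewrite (@sigma_of _ _ _ _ _ 1 hsv) (@sigma_of _ _ _ _ _ 2 hsv).
- have hmu : mu m n s = 0 by apply: mu0 => //; move: hmn; rewrite negb_and -!leqNgt; lia.
  have hsv : is_singvals (DTM (tmat (tr2 m) (tr2 n) (W2 s))) [:: 1, 1 & nseq (k' - 2) 0].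
    split.
    - by rewrite /= size_nseq; rewrite /k'; lia.
    - by rewrite /= lexx /= path_nseq0 ?ler01.
    - by rewrite /= ler01 all_nseq0.
    - apply: (mulIf hX3).
      rewrite charQ2 // hmu !big_cons prod_nseq0 expr1n subr0.
      have ex : 'X^(m+m) * 'X = 'X^(m + m - k') * 'X^(k' - 2) * ('X^3 : {poly R}).
        by rewrite -exprSr -!exprD; congr (_ ^+ _); lia.
      transitivity (('X^(m+m) * 'X * ('X - 1) ^+ 2 : {poly R})); first by ring.
      rewrite ex polyC1; ring.
  by rewrite (@sigma_of _ _ _ _ _ 1 hsv) (@sigma_of _ _ _ _ _ 2 hsv).
Qed.

Lemma J_Q2 m n (s lam : R) (hm : (0 < m)%N) (hn : (0 < n)%N) (hs : 1 < s) :
  Jfun lam (Pmat m n s) (Q2mat m n s) =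
  m%:R + n%:R + s ^+ 2 * (m%:R + n%:R - 2) - 2 * lam.
Proof.
have hM1 := @hM m hm; have hN1 := @hN n hn.
rewrite /Jfun (Q2_tmat _ _ _ hm hn) (P2_tmat _ _ _ hm hn) tmatB frob_sq sumsq_tmat DTM_scale; last first.
  rewrite invr_gt0 total_tmat !big_ord_recl !big_ord0 !cnt2 // !mxE /wQ /=.
  move: hs hM1 hN1; move: (m%:R : R) (n%:R : R) => x y h hx hy.
  have h1 : 0 <= (x - 1) * (y - 1) by apply: mulr_ge0; rewrite subr_ge0.
  have x0 : 0 < x by lra.
  have y0 : 0 < y by lra.
  have h2 : 0 < x * y * s by apply: mulr_gt0; [apply: mulr_gt0 | lra].
  nra.
have [-> ->] := sv_Q2 _ _ _ hm hn hs.
rewrite !big_ord_recl !big_ord0 !cnt2 // !mxE /wQ /=; ring.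
Qed.

End Q2.

Lemma adm_Q1 (R : rcfType) m n (s : R) : (0 < m)%N -> (0 < n)%N -> 0 < s -> admissible (Q1mat m n s).
Proof.
move=> hm hn hs; have sn : s != 0 by rewrite gt_eqF.
split; [|split].
- by move=> i j; rewrite Q1mat_E; case: ifP => _; [exact: ltW|].
- move=> i; case: (ltnP i m) => hi.
  + have h : (0 < n + n)%N by lia.
    by exists (Ordinal h); rewrite Q1mat_E /= hi hn.
  + have h : (n < n + n)%N by lia.
    by exists (Ordinal h); rewrite Q1mat_E /= ltnn ltnNge hi.
- move=> j; case: (ltnP j n) => hj.
  + have h : (0 < m + m)%N by lia.
    by exists (Ordinal h); rewrite Q1mat_E /= hj hm.
  + have h : (m < m + m)%N by lia.
    by exists (Ordinal h); rewrite Q1mat_E /= ltnn ltnNge hj.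
Qed.

Lemma adm_Q2 (R : rcfType) m n (s : R) : (0 < m)%N -> (0 < n)%N -> 1 < s -> admissible (Q2mat m n s).
Proof.
move=> hm hn hs; have sn : s != 0 by rewrite gt_eqF //; move: hs => h; lra.
have s0 : 0 <= s by move: hs => h; lra.
split; [|split].
- move=> i j; rewrite (Q2_tmat _ _ _ hm hn) !mxE /wQ.
  by do ![case: ifP => _]; rewrite ?ler01.
- move=> i; case: (eqVneq (nat_of_ord i) (m+m).-1) => hi.
  + have h : ((n + n).-1 < n + n)%N by lia.
    by exists (Ordinal h); rewrite mxE /= hi !eqxx.
  + have h : (0 < n + n)%N by lia.
    exists (Ordinal h); rewrite mxE /= (negbTE hi) /=.
    have -> : (0 == (n + n).-1)%N = false by apply/eqP; lia.
    rewrite Pmat_E; case: ifP => _ //; exact: oner_neq0.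
- move=> j; case: (eqVneq (nat_of_ord j) (n+n).-1) => hj.
  + have h : ((m + m).-1 < m + m)%N by lia.
    by exists (Ordinal h); rewrite mxE /= hj !eqxx.
  + have h : (0 < m + m)%N by lia.
    exists (Ordinal h); rewrite mxE /= (negbTE hj) /=.
    have -> : (0 == (m + m).-1)%N = false by apply/eqP; lia.
    rewrite orbF Pmat_E; case: ifP => _ //; exact: oner_neq0.
Qed.

Lemma numfact (R : rcfType) (m n : nat) (s : R) : (3 <= m + n)%N -> 1 < s ->
  s < Num.sqrt ((2 * m%:R * n%:R - m%:R - n%:R) / (m%:R + n%:R - 2)) ->
  m%:R + n%:R + s ^+ 2 * (m%:R + n%:R - 2) < 2 * m%:R * n%:R.
Proof.
move=> hmn hs hsq.
have hD : 1 <= m%:R + n%:R - 2 :> R.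
  have : (3 <= m%:R + n%:R :> R) by rewrite -natrD ler_nat.
  move=> h; lra.
move: hsq; set X := (2 * m%:R * n%:R - m%:R - n%:R) / (m%:R + n%:R - 2) => hsq.
have hX : s ^+ 2 < X.
  case: (ltP X 0) => hX0.
    by move: hsq; rewrite ltr0_sqrtr // => h; move: hs h => h1 h2; lra.
  by rewrite -(sqr_sqrtr hX0) ltr_pXn2r // ?nnegrE ?sqrtr_ge0 //; apply: ltW; apply: lt_trans hs; rewrite ltr01.
have : s ^+ 2 * (m%:R + n%:R - 2) < 2 * m%:R * n%:R - m%:R - n%:R.
  by rewrite -ltr_pdivlMr //; move: hD => h; lra.
move=> h; lra.
Qed.

Theorem mainTheorem6 (R : rcfType) (m n : nat) (s lam : R)
  (hm : (1 <= m)%N) (hn : (1 <= n)%N) (hmn : (3 <= m + n)%N)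
  (hs : 1 < s) (hlam : 0 < lam) :
  let P := Pmat m n s in
  let Q1 := Q1mat m n s in
  let Q2 := Q2mat m n s in
  [/\ admissible Q1, admissible Q2,
      Jfun lam P Q1 = 2 * m%:R * n%:R - 2 * lam,
      Jfun lam P Q2 = m%:R + n%:R + s ^+ 2 * (m%:R + n%:R - 2) - 2 * lam &
      (s < Num.sqrt ((2 * m%:R * n%:R - m%:R - n%:R) / (m%:R + n%:R - 2)) ->
        Jfun lam P Q2 < Jfun lam P Q1 /\
        ~ (forall Q : 'M[R]_(m + m, n + n), admissible Q -> Jfun lam P Q1 <= Jfun lam P Q))].
Proof.
move=> P Q1 Q2; rewrite {}/P {}/Q1 {}/Q2.
have s0 : 0 < s by move: hs => h; lra.
have J1 := J_Q1 _ _ _ lam hm hn s0.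
have J2 := J_Q2 _ _ _ lam hm hn hs.
have A2 := adm_Q2 _ _ _ _ hm hn hs.
split; [exact: adm_Q1 | exact: A2 | exact: J1 | exact: J2 | ].
move=> hsq.
have nf := numfact _ _ _ _ hmn hs hsq.
have hlt : Jfun lam (Pmat m n s) (Q2mat m n s) < Jfun lam (Pmat m n s) (Q1mat m n s).
  rewrite J1 J2; clear J1 J2 A2; lra.
split; first exact: hlt.
move=> H; have := H _ A2; by rewrite leNgt hlt.
Qed.
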